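(* Let $q\ge 2$ and $n,k\in\mathbb{N}$ with $2k\le n$. Suppose there is a function $b:\binom{[2k]}{k}\to A^n$ such that the sets $b(E)[E]$, for $E\in\binom{[2k]}{k}$, are pairwise disjoint. Then there exists $h\in F(n,q)$ having no trivial coordinate function and such that $\kappa^{\min}(h)\ge k$.
   Context: Let $q\ge 2$, $A=\{0,1,\dots,q-1\}$, $[n]=\{1,\dots,n\}$, and let $F(n,q)$ be the set of all maps $A^n\to A^n$. For $f\in F(m,q)$ and $i\in[m]$, $f_i$ is the $i$-th coordinate function and $f^i(x)=(x_1,\dots,x_{i-1},f_i(x),x_{i+1},\dots,x_m)$; for a word $w=(w_1,\dots,w_t)$ over $[m]$, $f^w=f^{w_t}\circ\cdots\circ f^{w_1}$. $\Pi([m])$ is the set of permutations of $[m]$ written as words $(w_1,\dots,w_m)$. $\mathrm{pr}_{[n]}:A^m\to A^n$ is the projection onto the first $n$ coordinates. For $m\ge n$, $(f,w)$ with $f\in F(m,q)$, $w\in\Pi([m])$ sequentializes $h\in F(n,q)$ if $\mathrm{pr}_{[n]}\circ f^w=h\circ\mathrm{pr}_{[n]}$. $\kappa^{\min}(h)$ is the smallest $k\ge 0$ such that there exist $f\in F(n+k,q)$ and $w\in\Pi([n+k])$ with $(f,w)$ sequentializing $h$. A coordinate function $h_i$ is trivial if $h_i(x)=x_i$ for all $x\in A^n$. For a set $I$, $\binom{I}{k}$ is the set of $k$-element subsets of $I$. For $x\in A^n$ and $I\subseteq[n]$, $x[I]=\{x'\in A^n : x'_j=x_j \text{ for all } j\in[n]\setminus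 I\}$. *)

(* Defs.v *)
From mathcomp Require Import all_boot.
Set Implicit Arguments. Unset Strict Implicit. Unset Printing Implicit Defensive.

(* A = {0,...,q-1} = 'I_q ; coordinates [n] = {1..n} are rendered as 'I_n (0-indexed). *)
Definition pt (q n : nat) := {ffun 'I_n -> 'I_q}.

Definition upd (q m : nat) (f : pt q m -> pt q m) (i : 'I_m) (x : pt q m) : pt q m :=
  [ffun j => if j == i then f x i else x j].

(* f^w = f^{w_t} o ... o f^{w_1}  (w_1 applied first) *)
Definition upd_word (q m : nat) (f : pt q m -> pt q m) (w : seq 'I_m) (x : pt q m) : pt q m :=
  foldl (fun y i => upd f i y) x w.

Definition is_perm_word (m : nat) (w : seq 'I_m) : bool := perm_eq w (enum 'I_m).

Definition proj (q n k : nat) (x : pt q (n + k)) : pt q n := [ffun j : 'I_n => x (lshift k j)].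

Definition sequentializes (q n k : nat) (h : pt q n -> pt q n)
  (f : pt q (n + k) -> pt q (n + k)) (w : seq 'I_(n + k)) : Prop :=
  is_perm_word w /\ forall x, @proj q n k (upd_word f w x) = h (@proj q n k x).

Definition sequentializable_with (q n : nat) (h : pt q n -> pt q n) (k : nat) : Prop :=
  exists (f : pt q (n + k) -> pt q (n + k)) (w : seq 'I_(n + k)), sequentializes h f w.

Definition kappa_min_ge (q n : nat) (h : pt q n -> pt q n) (k : nat) : Prop :=
  forall k', k' < k -> ~ sequentializable_with h k'.

Definition trivial_coord (q n : nat) (h : pt q n -> pt q n) (i : 'I_n) : Prop :=
  forall x, h x i = x i.

Definition box (q n : nat) (x : pt q n) (I : {set 'I_n}) : {set pt q n} :=
  [set x' : pt q n | [forall j, (j \notin I) ==> (x' j == x j)]].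

(* E is a k-element subset of [2k] (viewed inside [n]) *)
Definition ksub2k (n k : nat) (E : {set 'I_n}) : bool :=
  (E \subset [set j : 'I_n | j < 2 * k]) && (#|E| == k).

(* Main.v *)
Require Import Defs.
From mathcomp Require Import all_boot zify.
Set Implicit Arguments. Unset Strict Implicit. Unset Printing Implicit Defensive.

Lemma count_iota_int n a b : b <= n -> count (fun i => a <= i < b) (iota 0 n) = b - a.
Proof.
elim: n b => [|n IH] b hb.
  have -> : b = 0 by lia.
  by rewrite sub0n.
rewrite -addn1 iotaD count_cat /= add0n addn0.
case: (ltnP n b) => hnb.
- have eb : b = n.+1 by lia.
  subst b.
  rewrite (@eq_in_count _ _ (fun i => a <= i < n)); last first.
    move=> i; rewrite mem_iota add0n => /andP [_ hi].
    apply/idP/idP => /andP[h1 h2]; apply/andP; split => //; lia.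
  rewrite IH //.
  case: (leqP a n) => h /=; rewrite ?ltnSn /=; lia.
- rewrite IH //.
  by rewrite andbF addn0.
Qed.

Lemma card_set_count (T : finType) (p : pred T) (s : seq T) :
  uniq s -> #|[set i | p i && (i \in s)]| = count p s.
Proof.
move=> us.
rewrite -size_filter.
move/card_uniqP: (filter_uniq p us) => <-.
by apply: eq_card => i; rewrite inE mem_filter.
Qed.

Lemma card_ord_int n a b : b <= n -> #|[set i : 'I_n | a <= i < b]| = b - a.
Proof.
move=> hb.
rewrite (@eq_card _ _ [set i : 'I_n | (fun j : 'I_n => a <= j < b) i && (i \in enum 'I_n)]); last first.
  by move=> i; rewrite !inE mem_enum andbT.
rewrite card_set_count ?enum_uniq //.
rewrite -(count_iota_int a hb) -val_enum_ord count_map.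
by [].
Qed.

Lemma upd_word_notin q m (f : pt q m -> pt q m) (u : seq 'I_m) x j :
  j \notin u -> upd_word f u x j = x j.
Proof.
elim: u x => [|i u IH] x //=.
rewrite inE negb_or => /andP [hji hu].
rewrite /upd_word /= -/(upd_word f u _) IH // /upd ffunE.
by rewrite (negbTE hji).
Qed.

Lemma upd_word_cat q m (f : pt q m -> pt q m) u v x :
  upd_word f (u ++ v) x = upd_word f v (upd_word f u x).
Proof. by rewrite /upd_word foldl_cat. Qed.

Lemma exists_level (c : nat -> nat) N k :
  c 0 = 0 -> (forall t, c t.+1 <= (c t).+1) -> k <= c N -> exists t, c t = k.
Proof.
move=> c0 cs.
elim: N => [|N IH] hk.
  by exists 0; rewrite c0; move: hk; rewrite c0; lia.
case: (leqP k (c N)) => h; first exact: IH.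
exists N.+1; have := cs N; lia.
Qed.
Definition D2 n k : {set 'I_n} := [set j : 'I_n | j < 2 * k].

Definition incr q (a0 a1 : 'I_q) (a : 'I_q) : 'I_q := if a == a0 then a1 else a0.

Lemma incr_neq q (a0 a1 a : 'I_q) : a0 != a1 -> incr a0 a1 a != a.
Proof.
move=> h; rewrite /incr; case: (eqVneq a a0) => [->|hne]; first by rewrite eq_sym.
by rewrite eq_sym.
Qed.

Definition hform q n k (a0 a1 : 'I_q) (b : {set 'I_n} -> pt q n) (E : {set 'I_n}) (y : pt q n) : pt q n :=
  [ffun j => if j \in D2 n k :\: E then y (nth j (enum E) (index j (enum (D2 n k :\: E))))
             else incr a0 a1 (b E j)].

Definition hfun q n k (a0 a1 : 'I_q) (b : {set 'I_n} -> pt q n) (y : pt q n) : pt q n :=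
  match [pick E | ksub2k k E && (y \in box (b E) E)] with
  | Some E => hform k a0 a1 b E y
  | None => [ffun j => incr a0 a1 (y j)]
  end.

Lemma hbox q n k (a0 a1 : 'I_q) (b : {set 'I_n} -> pt q n)
  (hdisj : forall E E' : {set 'I_n}, ksub2k k E -> ksub2k k E' -> E != E' ->
           [disjoint box (b E) E & box (b E') E']) E y :
  ksub2k k E -> y \in box (b E) E -> hfun k a0 a1 b y = hform k a0 a1 b E y.
Proof.
move=> hE hy; rewrite /hfun; case: pickP => [E' /andP[hE' hy'] | hnone]; last first.
  by have := hnone E; rewrite hE hy.
case: (eqVneq E' E) => [-> //|ne].
have := disjointFr (hdisj _ _ hE' hE ne) hy'.
by rewrite hy.
Qed.

Lemma b_in_box q n (x : pt q n) E : x \in box x E.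
Proof. by rewrite inE; apply/forallP => j; apply/implyP. Qed.

Lemma card_D2 n k : 2 * k <= n -> #|D2 n k| = 2 * k.
Proof.
move=> h; have := card_ord_int 0 h; rewrite subn0 => <-; apply: eq_card => j; by rewrite !inE.
Qed.

Lemma ksub_int n k a : 2 * k <= n -> a <= k ->
  ksub2k k [set j : 'I_n | a <= j < a + k].
Proof.
move=> h ha; rewrite /ksub2k card_ord_int; last by lia.
rewrite addKn eqxx andbT; apply/subsetP => j; rewrite !inE => /andP[_ ?]; lia.
Qed.

Lemma nontriv q n k (a0 a1 : 'I_q) (b : {set 'I_n} -> pt q n)
  (hdisj : forall E E' : {set 'I_n}, ksub2k k E -> ksub2k k E' -> E != E' ->
           [disjoint box (b E) E & box (b E') E']) (hk : 2 * k <= n) (ha : a0 != a1) i :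
  ~ trivial_coord (hfun k a0 a1 b) i.
Proof.
move=> ht.
have [E [hE hi]] : exists E, ksub2k k E /\ i \notin D2 n k :\: E.
  case: (ltnP i k) => h1.
    exists [set j : 'I_n | 0 <= j < 0 + k]; split; first exact: ksub_int.
    by rewrite !inE h1.
  case: (ltnP i (2 * k)) => h2.
    exists [set j : 'I_n | k <= j < k + k]; split; first exact: ksub_int.
    rewrite !inE; apply/negP => /andP[/negP H _]; apply: H; apply/andP; split => //; lia.
  exists [set j : 'I_n | 0 <= j < 0 + k]; split; first exact: ksub_int.
  rewrite !inE; apply/negP => /andP[_ ?]; lia.
have := ht (b E).
rewrite (hbox _ _ hdisj hE (b_in_box _ _)) /hform ffunE (negbTE hi).
by move/eqP; rewrite (negbTE (incr_neq _ ha)).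
Qed.

Lemma kappa_part q n k (hq : 1 < q) (a0 a1 : 'I_q) (b : {set 'I_n} -> pt q n)
  (hdisj : forall E E' : {set 'I_n}, ksub2k k E -> ksub2k k E' -> E != E' ->
           [disjoint box (b E) E & box (b E') E']) (hk : 2 * k <= n) :
  kappa_min_ge (hfun k a0 a1 b) k.
Proof.
move=> k' hk' [f [w [hw hseq]]].
have n0 : 0 < n by lia.
pose j0 : 'I_n := Ordinal n0.
pose h := hfun k a0 a1 b.
have uw : uniq w by rewrite (perm_uniq hw) enum_uniq.
pose pD : pred 'I_(n + k') := fun i => i < 2 * k.
pose c t := count pD (take t w).
have [t ht] : exists t, c t = k.
  apply: (@exists_level c (size w)).
  - by rewrite /c take0.
  - move=> s; rewrite /c -addn1 takeD count_cat.
    case: (drop s w) => [|x r] /=; first by rewrite addn0 leqnSn.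
    rewrite take0 /= addn0 -addn1 leq_add2l; by case: (pD x).
  - rewrite /c take_size ((permP hw) pD).
    rewrite -[count pD _]/(count (preim val (fun i => i < 2 * k)) (enum 'I_(n + k'))).
    rewrite -count_map val_enum_ord.
    rewrite (@eq_count _ _ (fun i => 0 <= i < 2 * k)); last by move=> i.
    rewrite count_iota_int; lia.
pose P := take t w. pose S := drop t w.
pose E := [set j : 'I_n | (j < 2 * k) && (lshift k' j \in P)].
have hEk : #|E| = k.
  rewrite -(card_imset _ (@lshift_inj n k')).
  have -> : lshift k' @: E = [set i | pD i && (i \in P)].
    apply/setP => i; rewrite inE; apply/imsetP/idP.
      by move=> [j]; rewrite inE => hj ->.
    move=> /andP[hi hiP].
    have hin : i < n by rewrite /pD in hi; lia.
    have ei : lshift k' (Ordinal hin) = i by apply: val_inj.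
    exists (Ordinal hin); last by rewrite ei.
    by rewrite inE ei hiP andbT.
  by rewrite card_set_count ?take_uniq.
have hE : ksub2k k E.
  rewrite /ksub2k hEk eqxx andbT; apply/subsetP => j; rewrite !inE => /andP[] //.
have notS : forall i, i \in P -> i \notin S.
  move=> i hP; apply/negP => hS.
  move: uw; rewrite -(cat_take_drop t w) cat_uniq => /and3P[_ /hasPn H _].
  by have := H _ hS; rewrite /= hP.
have F3 : forall x, h (proj x) = proj (upd_word f S (upd_word f P x)).
  by move=> x; rewrite /h -hseq -upd_word_cat cat_take_drop.
have F1 : forall x j, lshift k' j \in P -> upd_word f P x (lshift k' j) = h (proj x) j.
  move=> x j hj; rewrite F3 ffunE [RHS]upd_word_notin //; exact: notS.
have F2 : forall x j, lshift k' j \notin P -> upd_word f P x (lshift k' j) = x (lshift k' j).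
  by move=> x j hj; rewrite upd_word_notin.
pose ext (y : pt q n) : pt q (n + k') :=
  [ffun i => match split i with inl a => y a | inr _ => a0 end].
have pext : forall y, proj (ext y) = y.
  move=> y; apply/ffunP => j; rewrite !ffunE.
  by have -> : split (lshift k' j) = inl j := unsplitK (inl _ j).
have extl : forall y j, ext y (lshift k' j) = y j.
  move=> y j; have := congr1 (fun F : pt q n => F j) (pext y); by rewrite ffunE.
pose sigma (y : pt q n) : {ffun 'I_k' -> 'I_q} := [ffun i => upd_word f P (ext y) (rshift n i)].
pose g (z : k.-tuple 'I_q) : pt q n :=
  [ffun j => if j \in E then nth a0 z (index j (enum E)) else b E j].
have gbox : forall z, g z \in box (b E) E.
  move=> z; rewrite inE; apply/forallP => j; apply/implyP => hj.
  by rewrite ffunE (negbTE hj).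
have D2E : #|D2 n k :\: E| = k.
  rewrite cardsD (setIidPr _); last first.
    by apply/subsetP => j; rewrite !inE => /andP[].
  rewrite card_D2 // hEk; lia.
have inj : injective (fun z => sigma (g z)).
  move=> z1 z2 /= hs.
  have h12 : h (g z1) = h (g z2).
    rewrite -(pext (g z1)) -(pext (g z2)) !F3; congr (proj (upd_word f S _)).
    apply/ffunP => i; rewrite -(splitK i); case: (split i) => [j|j] /=.
    - case hjP: (lshift k' j \in P).
      + rewrite !F1 // !pext /h !(hbox _ _ hdisj hE (gbox _)) /hform !ffunE.
        have -> : (j \in D2 n k :\: E) = false.
          by rewrite !inE; case: (ltnP j (2 * k)) => hj /=; rewrite ?hjP ?andbF.
        by [].
      + rewrite !F2 ?hjP // !extl !ffunE.
        have -> : (j \in E) = false by rewrite inE hjP andbF.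
        by [].
    - by have := congr1 (fun F : {ffun 'I_k' -> 'I_q} => F j) hs; rewrite !ffunE.
  move: h12; rewrite /h !(hbox _ _ hdisj hE (gbox _)) => heq.
  apply: val_inj; apply: (@eq_from_nth _ a0); first by rewrite !size_tuple.
  move=> i; rewrite size_tuple => hi.
  have hiE : i < size (enum E) by rewrite -cardE hEk.
  have hiD : i < size (enum (D2 n k :\: E)) by rewrite -cardE D2E.
  pose e := nth j0 (enum E) i.
  pose d := nth j0 (enum (D2 n k :\: E)) i.
  have eE : e \in E by rewrite -mem_enum mem_nth.
  have dD : d \in D2 n k :\: E by rewrite -mem_enum mem_nth.
  have ie : index e (enum E) = i by rewrite index_uniq ?enum_uniq.
  have id : index d (enum (D2 n k :\: E)) = i by rewrite index_uniq ?enum_uniq.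
  have := congr1 (fun F : pt q n => F d) heq; rewrite /hform !ffunE dD id.
  rewrite (@set_nth_default _ (enum E) j0 d i hiE) -/e eE ie.
  by [].
have := @leq_card _ _ _ inj.
rewrite card_tuple card_ffun !card_ord leqNgt ltn_exp2l //.
by rewrite hk'.
Qed.

Theorem mainTheorem4 (q n k : nat) (hq : 1 < q) (hk : 2 * k <= n)
  (b : {set 'I_n} -> pt q n)
  (hdisj : forall E E' : {set 'I_n}, ksub2k k E -> ksub2k k E' -> E != E' ->
           [disjoint box (b E) E & box (b E') E']) :
  exists h : pt q n -> pt q n,
    (forall i : 'I_n, ~ trivial_coord h i) /\ kappa_min_ge h k.
Proof.
have q0 : 0 < q by lia.
pose a0 : 'I_q := Ordinal q0.
pose a1 : 'I_q := Ordinal hq.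
have ha : a0 != a1 by [].
exists (hfun k a0 a1 b); split.
- by move=> i; apply: nontriv.
- exact: kappa_part.
Qed.
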